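(* Let $G$ be a $4$-regular graph, let $f$ be a proper $5$-edge coloring of $G$, and let $P$ be a path in $G$ all of whose edges are colored $1$ or $2$ under $f$. (a) Suppose $P$ has length $4$ with internal vertices $v_1,v_2,v_3$ in order along $P$, and suppose at least one of the following conditions fails: (i) $|f(v_i)\cap f(v_j)\setminus\{1,2\}|=1$ for all $i,j\in\{1,2,3\}$ with $i\neq j$; (ii) if $x_1,x_2$ are the two neighbors of $v_2$ distinct from $v_1$ and $v_3$, then each of the colors $3,4,5$ appears at $x_1$ and at $x_2$ under $f$. Then there is a proper $5$-edge coloring $g$ of $G$, obtainable from $f$ by a sequence of interchanges on bicolored paths with both colors in $\{3,4,5\}$, such that some color in $\{3,4,5\}$ is missing from $g(v_1)\cup g(v_2)$ or from $g(v_2)\cup g(v_3)$. (b) If $P$ has length $5$ with internal vertices $v_1,v_2,v_3,v_4$ in order along $P$, then there is a proper $5$-edge coloring $g$ of $G$, obtainable from $f$ by a sequence of interchanges on bicolored paths with both colors in $\{3,4,5\}$, such that for some $i\in\{1,2,3\}$ some color in $\{3,4,5\}$ is missing from $g(v_i)\cup g(v_{i+1})$.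
   Context: Graphs are finite and simple. A proper $5$-edge coloring is a map $f:E(G)\to\{1,\dots,5\}$ with adjacent edges receiving distinct colors. For a vertex $v$, $f(v)$ denotes the set of colors of edges incident to $v$; a color appears at $v$ if it is in $f(v)$. $G_f(a,b)$ is the subgraph induced by the edges colored $a$ or $b$. An interchange swaps colors $a$ and $b$ on one connected component of $G_f(a,b)$; an interchange on a bicolored path with colors $a,b$ is one where that component is a path. *)

(* Defs.v *)
From mathcomp Require Import all_boot.
Set Implicit Arguments. Unset Strict Implicit. Unset Printing Implicit Defensive.

Section Defs.
Variable T : finType.

Definition simple_graph (e : rel T) : Prop := symmetric e /\ irreflexive e.

Definition regular (k : nat) (e : rel T) : Prop :=
  forall v : T, #|[set u | e v u]| = k.

(* An edge colouring is a function on pairs of vertices, only its values on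
   edges matter; colours are the natural numbers 1..5. *)
Definition coloring := T -> T -> nat.

Definition proper5 (e : rel T) (f : coloring) : Prop :=
  [/\ forall x y, e x y -> f x y = f y x,
      forall x y, e x y -> 1 <= f x y <= 5 &
      forall x y z, e x y -> e x z -> y != z -> f x y != f x z].

Definition colors (e : rel T) (f : coloring) (v : T) : seq nat :=
  [seq f v u | u <- enum (e v)].

Definition kr (e : rel T) (f : coloring) (a b : nat) : rel T :=
  fun x y => e x y && ((f x y == a) || (f x y == b)).

Definition swapc (a b c : nat) : nat :=
  if c == a then b else if c == b then a else c.

Definition interchange (e : rel T) (f : coloring) (a b : nat) (x : T) : coloring :=
  fun y z => if kr e f a b y z && connect (kr e f a b) x y
             then swapc a b (f y z) else f y z.

(* The component of G_f(a,b) containing x is a path: its edges are exactly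
   the consecutive pairs of some sequence of distinct vertices. *)
Definition component_is_path (e : rel T) (f : coloring) (a b : nat) (x : T) : Prop :=
  exists (x0 : T) (s : seq T),
    [/\ uniq (x0 :: s), path (kr e f a b) x0 s,
        x \in x0 :: s &
        forall y z, connect (kr e f a b) x y -> kr e f a b y z ->
          exists i, ((nth x0 (x0 :: s) i == y) && (nth x0 (x0 :: s) i.+1 == z)
                     || (nth x0 (x0 :: s) i == z) && (nth x0 (x0 :: s) i.+1 == y))
                    && (i.+1 < size (x0 :: s))].

Definition path_interchange_345 (e : rel T) (f g : coloring) : Prop :=
  exists (a b : nat) (x : T),
    [/\ [&& a \in [:: 3; 4; 5], b \in [:: 3; 4; 5] & a != b],
        (exists y, kr e f a b x y),
        component_is_path e f a b x &
        g = interchange e f a b x].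

Inductive reach345 (e : rel T) : coloring -> coloring -> Prop :=
  | reach_refl f : reach345 e f f
  | reach_step f g h : path_interchange_345 e f g -> reach345 e g h -> reach345 e f h.

Definition missing_pair (e : rel T) (g : coloring) (u v : T) : Prop :=
  exists2 c, c \in [:: 3; 4; 5] & (c \notin colors e g u) && (c \notin colors e g v).

End Defs.

(* Main.v *)
Require Import Defs.
From mathcomp Require Import all_boot.
From Stdlib Require Import Classical.
From mathcomp Require Import zify.
Set Implicit Arguments. Unset Strict Implicit. Unset Printing Implicit Defensive.

Lemma swapcK a b c : swapc a b (swapc a b c) = c.
Proof.
rewrite /swapc; case: (c =P a) => [->|na].
  by rewrite eqxx; case: (b =P a) => [->|]; rewrite ?eqxx.
case: (c =P b) => [->|nb]; first by rewrite eqxx.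
by move/eqP/negbTE: na => ->; move/eqP/negbTE: nb => ->.
Qed.

Lemma swapc_id a b c : c != a -> c != b -> swapc a b c = c.
Proof. by rewrite /swapc => /negbTE -> /negbTE ->. Qed.

Lemma swapc_a a b : swapc a b a = b.
Proof. by rewrite /swapc eqxx. Qed.

Lemma swapc_b a b : swapc a b b = a.
Proof. by rewrite /swapc eqxx; case: (b =P a). Qed.

Section Aux.
Variable T : finType.
Variable e : rel T.
Hypothesis sg : simple_graph e.

Lemma e_sym x y : e x y = e y x. Proof. by case: sg => s _; apply: s. Qed.
Lemma e_irr x : e x x = false. Proof. by case: sg => _ i; apply: i. Qed.

Lemma colorsP (f : coloring T) u c : reflect (exists2 z, e u z & f u z = c) (c \in colors e f u).
Proof.
apply: (iffP mapP) => [[z]|[z]].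
  by rewrite mem_enum => Hz ->; exists z.
by move=> Hz <-; exists z; rewrite ?mem_enum.
Qed.

Section F.
Variable f : coloring T.
Hypothesis pf : proper5 e f.

Lemma f_sym x y : e x y -> f x y = f y x. Proof. by case: pf => H _ _; apply: H. Qed.
Lemma f_rng x y : e x y -> 1 <= f x y <= 5. Proof. by case: pf => _ H _; apply: H. Qed.
Lemma f_inj x y z : e x y -> e x z -> f x y = f x z -> y = z.
Proof.
case: pf => _ _ H exy exz E; case: (y =P z) => // /eqP ne.
by have := H _ _ _ exy exz ne; rewrite E eqxx.
Qed.

Lemma kr_sym a b : symmetric (kr e f a b).
Proof.
move=> x y; rewrite /kr; case: (boolP (e x y)) => exy.
  by rewrite -e_sym exy (f_sym exy).
by rewrite e_sym (negbTE exy).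
Qed.

Lemma kr_col a b y z : kr e f a b y z -> e y z /\ (f y z = a \/ f y z = b).
Proof. by case/andP => Hey /orP [] /eqP Ef; split => //; [left|right]. Qed.

Lemma kr_deg2 a b y z1 z2 z3 : kr e f a b y z1 -> kr e f a b y z2 -> kr e f a b y z3 ->
  z1 != z2 -> z1 != z3 -> z2 != z3 -> False.
Proof.
move=> /kr_col [e1 c1] /kr_col [e2 c2] /kr_col [e3 c3] n12 n13 n23.
have d12 : f y z1 != f y z2 by apply/eqP => /(f_inj e1 e2) /eqP; rewrite (negbTE n12).
have d13 : f y z1 != f y z3 by apply/eqP => /(f_inj e1 e3) /eqP; rewrite (negbTE n13).
have d23 : f y z2 != f y z3 by apply/eqP => /(f_inj e2 e3) /eqP; rewrite (negbTE n23).
by case: c1 c2 c3 d12 d13 d23 => -> [] -> [] ->; rewrite ?eqxx.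
Qed.

Lemma kr_both a b y z1 z2 : kr e f a b y z1 -> kr e f a b y z2 -> z1 != z2 ->
  (a \in colors e f y) && (b \in colors e f y).
Proof.
move=> /kr_col [e1 c1] /kr_col [e2 c2] n12.
have d12 : f y z1 != f y z2 by apply/eqP => /(f_inj e1 e2) /eqP; rewrite (negbTE n12).
case: c1 c2 d12 => E1 [] E2; rewrite E1 E2 ?eqxx // => _; apply/andP; split; apply/colorsP.
- by exists z1.
- by exists z2.
- by exists z2.
- by exists z1.
Qed.


Lemma maxpath a b v : exists s, [/\ uniq (v :: s), path (kr e f a b) v s &
  forall z, kr e f a b (last v s) z -> z \in v :: s].
Proof.
suff H : forall n s, #|T| - size s <= n -> uniq (v :: s) -> path (kr e f a b) v s ->
  exists s', [/\ uniq (v :: s'), path (kr e f a b) v s' &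
  forall z, kr e f a b (last v s') z -> z \in v :: s'].
  by apply: (H #|T| [::]) => //; rewrite subn0.
elim=> [|n IH] s Hn Hu Hp;
  (case: (pickP (fun z => kr e f a b (last v s) z && (z \notin v :: s))) => [z /andP [Hk Hz]|Hno]).
- have Hu' : uniq (v :: rcons s z) by rewrite -rcons_cons rcons_uniq Hz Hu.
  have := max_card (mem (v :: rcons s z)); rewrite (card_uniqP Hu') /= size_rcons.
  move: Hn; rewrite leqn0 subn_eq0 => H1 H2.
  by have := leq_trans H2 H1; rewrite ltnNge leqnSn.
- exists s; split => // z Hk; have := Hno z; rewrite Hk /= => /negbT; by rewrite negbK.
- apply: (IH (rcons s z)).
  + rewrite size_rcons; lia.
  + by rewrite -rcons_cons rcons_uniq Hz Hu.
  + by rewrite rcons_path Hp Hk.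
- exists s; split => // z Hk; have := Hno z; rewrite Hk /= => /negbT; by rewrite negbK.
Qed.


Lemma comp_struct a b v : a \in colors e f v -> b \notin colors e f v ->
  exists w, component_is_path e f a b v /\
   forall u, connect (kr e f a b) v u ->
     ~~ ((a \in colors e f u) && (b \in colors e f u)) -> u = v \/ u = w.
Proof.
move=> Ha Hb.
have K4 : forall z1 z2, kr e f a b v z1 -> kr e f a b v z2 -> z1 = z2.
  move=> z1 z2 k1 k2; case: (z1 =P z2) => // /eqP n.
  by have := kr_both k1 k2 n; rewrite (negbTE Hb) andbF.
have [z0 ez0 fz0] := colorsP f v a Ha.
have Kz0 : kr e f a b v z0 by rewrite /kr ez0 fz0 eqxx.
have [s [Hu Hp Hmax]] := maxpath a b v.
have sn : s != [::].
  apply/eqP => s0; move: Hmax; rewrite s0 /= => /(_ _ Kz0); rewrite inE => /eqP E.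
  by move: Kz0; rewrite E /kr e_irr.
set q := v :: s.
have HP : forall i, i.+1 < size q -> kr e f a b (nth v q i) (nth v q i.+1).
  by move=> i; move/(pathP v): Hp => H; exact: H i.
have Hn : forall i j, i < size q -> j < size q -> (nth v q i == nth v q j) = (i == j).
  by move=> i j hi hj; apply: nth_uniq.
have Hsz : 1 < size q by rewrite /q /=; move: sn; case: (s).
set w := last v s.
have Hw : nth v q (size q).-1 = w by rewrite nth_last.
have Hint : forall i, 0 < i -> i.+1 < size q ->
   [/\ kr e f a b (nth v q i) (nth v q i.-1), kr e f a b (nth v q i) (nth v q i.+1)
     & nth v q i.-1 != nth v q i.+1].
  move=> i i0 ii; split.
  - rewrite kr_sym; have := HP i.-1; rewrite prednK //; apply; exact: ltnW.
  - exact: HP.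
  - rewrite Hn; [apply/eqP; lia|move: ii; lia|by []].
have Hnb : forall y z, y \in q -> kr e f a b y z -> exists i,
    ((nth v q i == y) && (nth v q i.+1 == z) || (nth v q i == z) && (nth v q i.+1 == y))
    && (i.+1 < size q).
  move=> y z yq Kyz.
  have iq : index y q < size q by rewrite index_mem.
  have ny := nth_index v yq.
  move: iq ny; set i := index y q => iq ny.
  case: (posnP i) => [i0|ip].
  - have yv : y = v by rewrite -ny i0.
    exists 0; rewrite Hsz andbT; apply/orP; left; apply/andP; split; first by rewrite /= yv.
    have := HP 0 Hsz; rewrite /= -/q => K1; rewrite yv in Kyz; by rewrite (K4 _ _ K1 Kyz).
  - case: (ltnP i.+1 (size q)) => [ii|ii].
    + have [k1 k2 d] := Hint i ip ii; rewrite ny in k1 k2.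
      case: (z =P nth v q i.-1) => [zp|nzp].
        by exists i.-1; rewrite prednK // zp ny !eqxx iq orbT.
      case: (z =P nth v q i.+1) => [zs|nzs].
        by exists i; rewrite zs ny !eqxx ii.
      exfalso; apply: (kr_deg2 k1 k2 Kyz d); apply/eqP => E; [apply: nzp|apply: nzs]; by rewrite E.
    + have iE : i = (size q).-1 by move: iq ii; lia.
      have yw : y = w by rewrite -ny iE Hw.
      have zq : z \in q by apply: Hmax; rewrite -/w -yw.
      have jq : index z q < size q by rewrite index_mem.
      have nz := nth_index v zq.
      move: jq nz; set j := index z q => jq nz.
      case: (j.+1 =P i) => [ji|nji].
        by exists j; rewrite ji ny nz !eqxx iq orbT.
      exfalso.
      have jni : j != i.
        apply/eqP => E; move: Kyz; by rewrite -nz E ny /kr e_irr.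
      have jlt : j.+1 < i by move: jq iE jni nji; lia.
      case: (posnP j) => [j0|jp].
        have zv : z = v by rewrite -nz j0.
        have K1 := HP 0 Hsz; rewrite /= -/q in K1.
        have Kvy : kr e f a b v y by rewrite -zv kr_sym.
        have E := K4 _ _ Kvy K1.
        move: (Hn i 1 iq Hsz); rewrite ny E eqxx => /esym /eqP i1.
        by move: nji; rewrite i1 j0.
      have [k1 k2 d] := Hint j jp (ltn_trans jlt iq); rewrite nz in k1 k2.
      have Kzy : kr e f a b z y by rewrite kr_sym.
      have h2 : j.+1 < i := jlt.
      have h1 : j.-1 < i := leq_ltn_trans (leq_pred j) (ltn_trans (ltnSn j) jlt).
      have h3 : j.-1 < size q := leq_ltn_trans (leq_pred j) jq.
      have h4 : j.+1 < size q := ltn_trans jlt iq.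
      apply: (kr_deg2 k1 k2 Kzy d); rewrite -ny Hn //.
      all: try by rewrite neq_ltn ?h1 ?h2.
have Hmem : forall i y z, ((nth v q i == y) && (nth v q i.+1 == z) ||
    (nth v q i == z) && (nth v q i.+1 == y)) && (i.+1 < size q) -> z \in q.
  move=> i y z /andP [/orP [] /andP [/eqP E1 /eqP E2] ilt].
    by rewrite -E2 mem_nth.
  by rewrite -E1 mem_nth // ltnW.
have cl : closed (kr e f a b) [pred x | x \in q].
  move=> x y Kxy /=; apply/idP/idP => H.
    by have [i Hi] := Hnb _ _ H Kxy; exact: Hmem Hi.
  by rewrite kr_sym in Kxy; have [i Hi] := Hnb _ _ H Kxy; exact: Hmem Hi.
have Hcl : forall u, connect (kr e f a b) v u -> u \in q.
  by move=> u C; have := closed_connect cl C; rewrite /= mem_head => <-.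
exists w; split.
  exists v, s; split => //; first exact: mem_head.
  by move=> y z C K; apply: Hnb => //; exact: Hcl.
move=> u C Hab.
have uq := Hcl u C.
have iq : index u q < size q by rewrite index_mem.
have nu := nth_index v uq.
move: iq nu; set i := index u q => iq nu.
case: (posnP i) => [i0|ip]; first by left; rewrite -nu i0.
case: (ltnP i.+1 (size q)) => [ii|ii].
  have [k1 k2 d] := Hint i ip ii; rewrite nu in k1 k2.
  by have := kr_both k1 k2 d; rewrite (negbTE Hab).
right; have iE : i = (size q).-1 by move: iq ii; lia.
by rewrite -nu iE Hw.
Qed.


Lemma in345_rng c : c \in [:: 3; 4; 5] -> 1 <= c <= 5.
Proof. by rewrite !inE => /or3P [] /eqP ->. Qed.

Section Inter.
Variables (a b : nat) (x : T).
Let g : coloring T := @Defs.interchange T e f a b x.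

Lemma gsame y z : ~~ connect (kr e f a b) x y -> g y z = f y z.
Proof. by move=> H; rewrite /g /Defs.interchange (negbTE H) andbF. Qed.

Lemma gswap y z : connect (kr e f a b) x y -> e y z -> g y z = swapc a b (f y z).
Proof.
move=> C ey; rewrite /g /Defs.interchange C andbT; case: ifP => // Hk.
move: Hk; rewrite /kr ey /= => /negbT; rewrite negb_or => /andP [h1 h2].
by rewrite swapc_id.
Qed.

Lemma inter_proper : a \in [:: 3; 4; 5] -> b \in [:: 3; 4; 5] -> proper5 e g.
Proof.
move=> Ha Hb; split.
- move=> y z eyz; rewrite /g /Defs.interchange (kr_sym a b z y) -(f_sym eyz).
  case: (boolP (kr e f a b y z)) => //= Hk.
  have -> : connect (kr e f a b) x z = connect (kr e f a b) x y; last by [].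
  apply/idP/idP => C; apply: connect_trans C (connect1 _) => //; by rewrite kr_sym.
- move=> y z eyz; case: (boolP (connect (kr e f a b) x y)) => C.
    rewrite gswap // /swapc; case: ifP => _; first exact: in345_rng Hb.
    by case: ifP => _; [exact: in345_rng Ha|exact: f_rng].
  by rewrite gsame //; exact: f_rng.
- move=> y z1 z2 e1 e2 n; case: (boolP (connect (kr e f a b) x y)) => C.
    rewrite !gswap //; apply/eqP => E.
    have E' := congr1 (swapc a b) E; rewrite !swapcK in E'.
    by move: n; rewrite (f_inj e1 e2 E') eqxx.
  by rewrite !gsame //; case: pf => _ _; apply.
Qed.

Lemma colors_in u c : connect (kr e f a b) x u ->
  (c \in colors e g u) = (swapc a b c \in colors e f u).
Proof.
move=> C; apply/colorsP/colorsP => [[z ez E]|[z ez E]]; exists z => //.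
  by move: E; rewrite gswap // => <-; rewrite swapcK.
by rewrite gswap // E swapcK.
Qed.

Lemma colors_out u : ~~ connect (kr e f a b) x u -> colors e g u = colors e f u.
Proof. by move=> C; rewrite /colors; apply: eq_map => z; exact: gsame. Qed.

End Inter.

Lemma swap a b v : a \in [:: 3; 4; 5] -> b \in [:: 3; 4; 5] -> a != b ->
  a \in colors e f v -> b \notin colors e f v ->
  exists g, [/\ path_interchange_345 e f g, proper5 e g &
  exists w, [/\ (forall u, connect (kr e f a b) v u -> forall c,
                   (c \in colors e g u) = (swapc a b c \in colors e f u)),
     (forall u, ~~ connect (kr e f a b) v u -> colors e g u = colors e f u),
     (forall u, connect (kr e f a b) v u ->
        ~~ ((a \in colors e f u) && (b \in colors e f u)) -> u = v \/ u = w) &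
     (forall y z, e y z -> f y z != a -> f y z != b -> g y z = f y z)]].
Proof.
move=> Ha Hb nab Hva Hvb.
have [w [Hc Hend]] := comp_struct Hva Hvb.
exists (Defs.interchange e f a b v); split.
- exists a, b, v; split => //; first by rewrite Ha Hb nab.
  have [z ez fz] := colorsP f v a Hva; exists z; by rewrite /kr ez fz eqxx.
- exact: inter_proper.
- exists w; split => //; [move=> u C c; exact: colors_in|move=> u C; exact: colors_out|].
  move=> y z ey ha hb; case: (boolP (connect (kr e f a b) v y)) => C.
    by rewrite gswap // swapc_id.
  by rewrite gsame.
Qed.

End F.

Lemma reach_trans f g h : reach345 e f g -> reach345 e g h -> reach345 e f h.
Proof.
move=> H; elim: H h => [f0|f0 g0 h0 H1 _ IH] h2 H2 //; exact: reach_step H1 (IH _ H2).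
Qed.

Lemma mp_sym g p q : missing_pair e g p q -> missing_pair e g q p.
Proof. by case=> c Hc /andP [h1 h2]; exists c => //; rewrite h1 h2. Qed.

Lemma triple f p q r x y : proper5 e f -> x \in [:: 3; 4; 5] -> y \in [:: 3; 4; 5] -> x != y ->
  x \notin colors e f p -> x \notin colors e f r -> x \in colors e f q -> y \notin colors e f q ->
  p != q -> q != r -> p != r ->
  exists g, [/\ reach345 e f g, proper5 e g & missing_pair e g p q \/ missing_pair e g q r].
Proof.
move=> pf Hx Hy nxy Hp Hr Hqx Hqy npq nqr npr.
have [g [Hg pg [w [Hin Hout Hend _]]]] := swap pf Hx Hy nxy Hqx Hqy.
have Hqg : x \notin colors e g q by rewrite (Hin q (connect0 _ q)) swapc_a.
exists g; split => //; first exact: reach_step Hg (reach_refl e g).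
case: (boolP (connect (kr e f x y) q p)) => Cp; last first.
  by left; exists x => //; rewrite (Hout p Cp) Hp Hqg.
have : ~~ ((x \in colors e f p) && (y \in colors e f p)) by rewrite (negbTE Hp).
move/(Hend p Cp) => [E|Epw]; first by rewrite E eqxx in npq.
case: (boolP (connect (kr e f x y) q r)) => Cr; last first.
  by right; exists x => //; rewrite (Hout r Cr) Hr Hqg.
have : ~~ ((x \in colors e f r) && (y \in colors e f r)) by rewrite (negbTE Hr).
move/(Hend r Cr) => [E|Erw]; first by rewrite E eqxx in nqr.
by rewrite Epw Erw eqxx in npr.
Qed.

Lemma S1 f p q x k b : proper5 e f -> k \in [:: 3; 4; 5] -> b \in [:: 3; 4; 5] -> k != b ->
  e q x -> f q x = k -> b \notin colors e f q -> b \notin colors e f x -> k \notin colors e f p ->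
  p != x -> p != q ->
  exists g, [/\ reach345 e f g, proper5 e g & missing_pair e g p q].
Proof.
move=> pf Hk Hb nkb eqx fqx Hqb Hxb Hpk npx npq.
have Hqk : k \in colors e f q by apply/colorsP; exists x.
have [g [Hg pg [w [Hin Hout Hend _]]]] := swap pf Hk Hb nkb Hqk Hqb.
exists g; split => //; first exact: reach_step Hg (reach_refl e g).
have Cx : connect (kr e f k b) q x by apply: connect1; rewrite /kr eqx fqx eqxx.
have : ~~ ((k \in colors e f x) && (b \in colors e f x)) by rewrite (negbTE Hxb) andbF.
move/(Hend x Cx) => [E|Exw]; first by move: eqx; rewrite E e_irr.
case: (boolP (connect (kr e f k b) q p)) => Cp.
  have : ~~ ((k \in colors e f p) && (b \in colors e f p)) by rewrite (negbTE Hpk).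
  move/(Hend p Cp) => [E|E]; [by rewrite E eqxx in npq | by rewrite E -Exw eqxx in npx].
by exists k => //; rewrite (Hout p Cp) Hpk (Hin q (connect0 _ q)) swapc_a Hqb.
Qed.

Lemma S2 f p q r x k b d : proper5 e f ->
  k \in [:: 3; 4; 5] -> b \in [:: 3; 4; 5] -> d \in [:: 3; 4; 5] -> k != b -> k != d -> b != d ->
  e q x -> f q x = k -> b \notin colors e f q -> b \in colors e f x -> d \notin colors e f x ->
  d \notin colors e f p -> k \notin colors e f r ->
  p != q -> r != q -> x != p -> x != r ->
  exists g, [/\ reach345 e f g, proper5 e g & missing_pair e g q p \/ missing_pair e g r q].
Proof.
move=> pf Hk Hb Hd nkb nkd nbd eqx fqx Hqb Hxb Hxd Hpd Hrk npq nrq nxp nxr.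
have nxq : x != q by apply/eqP => E; move: eqx; rewrite E e_irr.
have [g1 [Hg1 pg1 [w [Hin Hout Hend Hgv]]]] := swap pf Hb Hd nbd Hxb Hxd.
have R1 : reach345 e f g1 := reach_step Hg1 (reach_refl e g1).
case: (boolP (connect (kr e f b d) x q)) => Cq.
  have : ~~ ((b \in colors e f q) && (d \in colors e f q)) by rewrite (negbTE Hqb).
  move/(Hend q Cq) => [E|Eqw]; first by rewrite E eqxx in nxq.
  exists g1; split => //; left.
  have Cp : ~~ connect (kr e f b d) x p.
    apply/negP => Cp.
    have : ~~ ((b \in colors e f p) && (d \in colors e f p)) by rewrite (negbTE Hpd) andbF.
    move/(Hend p Cp) => [E|E]; [by rewrite E eqxx in nxp | by rewrite E -Eqw eqxx in npq].
  by exists d => //; rewrite (Hin q Cq) swapc_b Hqb (Hout p Cp) Hpd.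
case: (boolP (connect (kr e f b d) x p)) => Cp.
  exists g1; split => //; left.
  by exists b => //; rewrite (Hout q Cq) Hqb (Hin p Cp) swapc_a Hpd.
have Hxg : b \notin colors e g1 x by rewrite (Hin x (connect0 _ x)) swapc_a.
have Hqg : b \notin colors e g1 q by rewrite (Hout q Cq).
have Hrg : k \notin colors e g1 r.
  case: (boolP (connect (kr e f b d) x r)) => Cr.
    by rewrite (Hin r Cr) swapc_id.
  by rewrite (Hout r Cr).
have fg : g1 q x = k by rewrite Hgv // fqx.
have nrx : r != x by rewrite eq_sym.
have [g2 [R2 pg2 M2]] := S1 pg1 Hk Hb nkb eqx fg Hqg Hxg Hrg nrx nrq.
by exists g2; split => //; [exact: reach_trans R1 R2|right].
Qed.

Lemma ABCA f p1 p2 p3 p4 a b c : proper5 e f ->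
  a \in [:: 3; 4; 5] -> b \in [:: 3; 4; 5] -> c \in [:: 3; 4; 5] -> a != b -> b != c -> a != c ->
  a \notin colors e f p1 -> b \notin colors e f p2 -> a \in colors e f p2 ->
  c \notin colors e f p3 -> a \in colors e f p3 -> b \in colors e f p3 ->
  a \notin colors e f p4 -> b \in colors e f p4 ->
  p1 != p2 -> p2 != p3 -> p3 != p4 -> p2 != p4 -> p1 != p4 ->
  exists g, [/\ reach345 e f g, proper5 e g &
     [\/ missing_pair e g p1 p2, missing_pair e g p2 p3 | missing_pair e g p3 p4]].
Proof.
move=> pf Ha Hb Hc nab nbc nac H1a H2b H2a H3c H3a H3b H4a H4b n12 n23 n34 n24 n14.
have [g0 [H0 pg0 [w [Hin Hout Hend _]]]] := swap pf Ha Hb nab H2a H2b.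
case: (boolP (connect (kr e f a b) p2 p1)) => C1; last first.
  exists g0; split => //; first exact: reach_step H0 (reach_refl e g0).
  apply: Or31; exists a => //.
  by rewrite (Hout p1 C1) H1a (Hin p2 (connect0 _ _)) swapc_a H2b.
have : ~~ ((a \in colors e f p1) && (b \in colors e f p1)) by rewrite (negbTE H1a).
move/(Hend p1 C1) => [E|E1w]; first by rewrite E eqxx in n12.
have C4 : ~~ connect (kr e f a b) p2 p4.
  apply/negP => C4.
  have : ~~ ((a \in colors e f p4) && (b \in colors e f p4)) by rewrite (negbTE H4a).
  move/(Hend p4 C4) => [E|E]; [by rewrite E eqxx in n24 | by rewrite E -E1w eqxx in n14].
have nba : b != a by rewrite eq_sym.
have [g1 [H1 pg1 [w' [Hin' Hout' Hend' _]]]] := swap pf Hb Ha nba H4b H4a.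
have Ekr : kr e f b a =2 kr e f a b by move=> y z; rewrite /kr orbC.
have C2 : ~~ connect (kr e f b a) p4 p2.
  by rewrite (eq_connect Ekr) (sym_connect_sym (kr_sym pf a b)).
have Hp2g : b \notin colors e g1 p2 by rewrite (Hout' p2 C2).
have Hp4g : b \notin colors e g1 p4 by rewrite (Hin' p4 (connect0 _ _)) swapc_a.
have Hp3c : c \notin colors e g1 p3.
  case: (boolP (connect (kr e f b a) p4 p3)) => C3; last by rewrite (Hout' p3 C3).
  by rewrite (Hin' p3 C3) swapc_id // eq_sym.
have Hp3b : b \in colors e g1 p3.
  case: (boolP (connect (kr e f b a) p4 p3)) => C3; last by rewrite (Hout' p3 C3).
  by rewrite (Hin' p3 C3) swapc_a.
have [g2 [R2 pg2 M2]] := triple pg1 Hb Hc nbc Hp2g Hp4g Hp3b Hp3c n23 n34 n24.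
exists g2; split => //; first exact: reach_step H1 R2.
by case: M2 => M; [apply: Or32|apply: Or33].
Qed.

End Aux.
Section Reg.
Variable T : finType.
Variable e : rel T.
Hypothesis sg : simple_graph e.
Hypothesis reg : regular 4 e.

Lemma colors_size f u : size (colors e f u) = 4.
Proof. rewrite /colors size_map -cardE; have := reg u; by rewrite cardsE. Qed.

Lemma colors_uniq f u : proper5 e f -> uniq (colors e f u).
Proof.
move=> pf; rewrite /colors map_inj_in_uniq ?enum_uniq //.
move=> y z; rewrite !mem_enum => ey ez; exact: (f_inj pf ey ez).
Qed.

Lemma colors_rng f u c : proper5 e f -> c \in colors e f u -> c \in iota 1 5.
Proof. move=> pf /colorsP [z ez <-]; rewrite mem_iota; have := f_rng pf ez; lia. Qed.

Lemma in345_iota c : c \in [:: 3; 4; 5] -> c \in iota 1 5.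
Proof. by rewrite !inE => /or3P [] /eqP ->. Qed.

Lemma two_missing f u c1 c2 : proper5 e f -> c1 != c2 -> c1 \in iota 1 5 -> c2 \in iota 1 5 ->
  c1 \notin colors e f u -> c2 \notin colors e f u -> False.
Proof.
move=> pf n12 h1 h2 m1 m2.
have U : uniq [:: c1, c2 & colors e f u].
  by rewrite /= !inE negb_or n12 m1 m2 colors_uniq.
have S : {subset [:: c1, c2 & colors e f u] <= iota 1 5}.
  move=> c; rewrite in_cons => /orP [/eqP ->//|]; rewrite in_cons => /orP [/eqP ->//|].
  exact: colors_rng.
by have := uniq_leq_size U S; rewrite /= colors_size.
Qed.

Lemma miss345 f u : proper5 e f -> 1 \in colors e f u -> 2 \in colors e f u ->
  exists m, [/\ m \in [:: 3; 4; 5], m \notin colors e f u &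
     forall c, c \in [:: 3; 4; 5] -> c != m -> c \in colors e f u].
Proof.
move=> pf h1 h2.
have key : forall m, m \in [:: 3; 4; 5] -> m \notin colors e f u ->
     forall c, c \in [:: 3; 4; 5] -> c != m -> c \in colors e f u.
  move=> m Hm Hmu c Hc ncm; apply/negPn/negP => Hcu.
  exact: (two_missing pf ncm (in345_iota Hc) (in345_iota Hm) Hcu Hmu).
case h3: (3 \in colors e f u); last by exists 3; split; rewrite ?h3 //; apply: key; rewrite ?h3.
case h4: (4 \in colors e f u); last by exists 4; split; rewrite ?h4 //; apply: key; rewrite ?h4.
case h5: (5 \in colors e f u); last by exists 5; split; rewrite ?h5 //; apply: key; rewrite ?h5.
have S : {subset [:: 1; 2; 3; 4; 5] <= colors e f u}.
  by move=> c; rewrite !inE => /orP [/eqP->|/orP [/eqP->|/orP [/eqP->|/orP [/eqP->|/eqP->]]]].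
by have := uniq_leq_size (isT : uniq [:: 1; 2; 3; 4; 5]) S; rewrite colors_size.
Qed.

Lemma cnt f x y mx my : mx \in [:: 3;4;5] -> my \in [:: 3;4;5] -> mx != my ->
  mx \notin colors e f x -> (forall c, c \in [:: 3;4;5] -> c != mx -> c \in colors e f x) ->
  my \notin colors e f y -> (forall c, c \in [:: 3;4;5] -> c != my -> c \in colors e f y) ->
  count (fun c => (c \in colors e f x) && (c \in colors e f y)) [:: 3; 4; 5] = 1.
Proof.
move=> Hx Hy nxy mx' Cx my' Cy.
have Ex : forall c, c \in [:: 3;4;5] -> (c \in colors e f x) = (c != mx).
  move=> c Hc; case: (c =P mx) => [->|/eqP n]; [exact: negbTE|exact: Cx].
have Ey : forall c, c \in [:: 3;4;5] -> (c \in colors e f y) = (c != my).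
  move=> c Hc; case: (c =P my) => [->|/eqP n]; [exact: negbTE|exact: Cy].
rewrite (@eq_in_count _ _ (fun c => (c != mx) && (c != my)) [:: 3; 4; 5]); last first.
  by move=> c Hc /=; rewrite Ex ?Ey.
by move: Hx Hy nxy; rewrite !inE => /or3P [] /eqP -> /or3P [] /eqP ->.
Qed.

End Reg.

Lemma three k a b c : k \in [:: 3;4;5] -> a \in [:: 3;4;5] -> b \in [:: 3;4;5] -> c \in [:: 3;4;5] ->
  a != b -> b != c -> a != c -> k != b -> (k == a) || (k == c).
Proof. by rewrite !inE => /or3P [] /eqP -> /or3P [] /eqP -> /or3P [] /eqP -> /or3P [] /eqP ->. Qed.


Unset Implicit Arguments.
Ltac dist Hu := let E := fresh "E" in apply/eqP => E; move: Hu; rewrite E /= !inE !eqxx /= ?orbT ?andbF.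

Lemma k345_lem p r k : (p==1)||(p==2) -> (r==1)||(r==2) -> p != r -> k != p -> k != r -> 1 <= k <= 5 -> k \in [:: 3;4;5].
Proof.
case/orP => /eqP ->; case/orP => /eqP -> //; move=> _ h1 h2;
case: k h1 h2 => [|[|[|[|[|[|kk]]]]]] //.
Qed.

Theorem lemma2p1 (T : finType) (e : rel T) (f : coloring T) :
  simple_graph e -> regular 4 e -> proper5 e f ->
  (* (a) *)
  (forall u0 v1 v2 v3 u4 : T,
     uniq [:: u0; v1; v2; v3; u4] ->
     path e u0 [:: v1; v2; v3; u4] ->
     (forall x y, (x, y) \in [:: (u0, v1); (v1, v2); (v2, v3); (v3, u4)] ->
        (f x y == 1) || (f x y == 2)) ->
     ~ ( (forall x y, x \in [:: v1; v2; v3] -> y \in [:: v1; v2; v3] -> x != y ->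
            count (fun c => (c \in colors e f x) && (c \in colors e f y)) [:: 3; 4; 5] = 1)
         /\ (forall x, e v2 x -> x != v1 -> x != v3 ->
               forall c, c \in [:: 3; 4; 5] -> c \in colors e f x) ) ->
     exists g : coloring T,
       [/\ reach345 e f g, proper5 e g &
           missing_pair e g v1 v2 \/ missing_pair e g v2 v3])
  /\
  (* (b) *)
  (forall u0 v1 v2 v3 v4 u5 : T,
     uniq [:: u0; v1; v2; v3; v4; u5] ->
     path e u0 [:: v1; v2; v3; v4; u5] ->
     (forall x y, (x, y) \in [:: (u0, v1); (v1, v2); (v2, v3); (v3, v4); (v4, u5)] ->
        (f x y == 1) || (f x y == 2)) ->
     exists g : coloring T,
       [/\ reach345 e f g, proper5 e g &
           [\/ missing_pair e g v1 v2, missing_pair e g v2 v3 | missing_pair e g v3 v4]]).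
Proof.
move=> sg reg pf.
have has12 : forall u y z, e u y -> e u z -> y != z -> (f u y == 1) || (f u y == 2) ->
   (f u z == 1) || (f u z == 2) -> (1 \in colors e f u) && (2 \in colors e f u).
  move=> u y z ey ez nyz hy hz.
  have d : f u y != f u z by apply/eqP => /(f_inj pf ey ez) /eqP; rewrite (negbTE nyz).
  have Py : f u y \in colors e f u by apply/colorsP; exists y.
  have Pz : f u z \in colors e f u by apply/colorsP; exists z.
  case/orP: hy => /eqP Ey; case/orP: hz => /eqP Ez; move: d Py Pz; rewrite Ey Ez => d P1 P2;
   rewrite ?P1 ?P2 //; by rewrite eqxx in d.
have mid : forall x y z, e x y -> e y z -> x != z -> (f x y == 1) || (f x y == 2) ->
   (f y z == 1) || (f y z == 2) -> (1 \in colors e f y) && (2 \in colors e f y).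
  move=> x y z exy eyz nxz h1 h2; apply: (has12 y x z) => //; first by rewrite (e_sym sg).
  by rewrite -(f_sym pf exy).
split.
- move=> u0 v1 v2 v3 u4 Hu Hp Hc Hcond.
  move: Hp => /= /and5P [e01 e12 e23 e34 _].
  have c01 : (f u0 v1 == 1) || (f u0 v1 == 2) by apply: Hc; rewrite !inE eqxx ?orbT.
  have c12 : (f v1 v2 == 1) || (f v1 v2 == 2) by apply: Hc; rewrite !inE eqxx ?orbT.
  have c23 : (f v2 v3 == 1) || (f v2 v3 == 2) by apply: Hc; rewrite !inE eqxx ?orbT.
  have c34 : (f v3 u4 == 1) || (f v3 u4 == 2) by apply: Hc; rewrite !inE eqxx ?orbT.
  have n02 : u0 != v2 by dist Hu.
  have n13 : v1 != v3 by dist Hu.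
  have n24 : v2 != u4 by dist Hu.
  have n12 : v1 != v2 by dist Hu.
  have n23 : v2 != v3 by dist Hu.
  have /andP [h11 h12] := mid _ _ _ e01 e12 n02 c01 c12.
  have /andP [h21 h22] := mid _ _ _ e12 e23 n13 c12 c23.
  have /andP [h31 h32] := mid _ _ _ e23 e34 n24 c23 c34.
  have [m1 [M1a M1b M1c]] := miss345 reg pf h11 h12.
  have [m2 [M2a M2b M2c]] := miss345 reg pf h21 h22.
  have [m3 [M3a M3b M3c]] := miss345 reg pf h31 h32.
  case: (m1 =P m2) => [E12|/eqP n12m].
    exists f; split => //; first exact: reach_refl.
    by left; exists m1 => //; apply/andP; split => //; rewrite E12.
  case: (m2 =P m3) => [E23|/eqP n23m].
    exists f; split => //; first exact: reach_refl.
    by right; exists m2 => //; apply/andP; split => //; rewrite E23.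
  case: (m1 =P m3) => [E13|/eqP n13m].
    have X : m1 \notin colors e f v3 by rewrite E13.
    have [g [R P M]] := triple sg pf M1a M2a n12m M1b X (M2c m1 M1a n12m) M2b
                          n12 n23 n13.
    by exists g.
  case: (classic (exists g, [/\ reach345 e f g, proper5 e g &
           missing_pair e g v1 v2 \/ missing_pair e g v2 v3])) => // Hng.
  exfalso; apply: Hcond; split.
    have n21m : m2 != m1 by rewrite eq_sym.
    have n32m : m3 != m2 by rewrite eq_sym.
    have n31m : m3 != m1 by rewrite eq_sym.
    move=> x y; rewrite !inE => /or3P [] /eqP -> /or3P [] /eqP -> nxy;
      try by rewrite eqxx in nxy.
    1-6: first [exact: (cnt M1a M2a n12m M1b M1c M2b M2c)
               |exact: (cnt M1a M3a n13m M1b M1c M3b M3c)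
               |exact: (cnt M2a M1a n21m M2b M2c M1b M1c)
               |exact: (cnt M2a M3a n23m M2b M2c M3b M3c)
               |exact: (cnt M3a M1a n31m M3b M3c M1b M1c)
               |exact: (cnt M3a M2a n32m M3b M3c M2b M2c)].
  move=> x ex nx1 nx3 d Hd; apply/negPn/negP => Hxd; apply: Hng.
  have e21 : e v2 v1 by rewrite (e_sym sg).
  move Ek: (f v2 x) => k.
  have kin : k \in colors e f v2 by apply/colorsP; exists x.
  have kx : k \in colors e f x by apply/colorsP; exists v2; [rewrite (e_sym sg)|rewrite -(f_sym pf ex)].
  have f21 : (f v2 v1 == 1) || (f v2 v1 == 2) by rewrite -(f_sym pf e12).
  have d13 : f v2 v1 != f v2 v3.
    by apply/eqP => /(f_inj pf e21 e23) /eqP; rewrite (negbTE n13).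
  have k1 : k != f v2 v1 by rewrite -Ek; apply/eqP => /(f_inj pf ex e21) /eqP; rewrite (negbTE nx1).
  have k3 : k != f v2 v3 by rewrite -Ek; apply/eqP => /(f_inj pf ex e23) /eqP; rewrite (negbTE nx3).
  have k345 : k \in [:: 3; 4; 5].
    have := f_rng pf ex; rewrite Ek.
    exact: k345_lem f21 c23 d13 k1 k3.
  have km2 : k != m2 by apply/eqP => E; move: kin; rewrite E (negbTE M2b).
  have dk : d != k by apply/eqP => E; move: Hxd; rewrite E kx.
  have /orP [/eqP Ek1|/eqP Ek3] := three k345 M1a M2a M3a n12m n23m n13m km2.
  + case: (d =P m2) => [Ed|/eqP ndm2].
      have X1 : m2 \notin colors e f x by rewrite -Ed.
      have X2 : k \notin colors e f v1 by rewrite Ek1.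
      have X3 : v1 != x by rewrite eq_sym.
      have [g [R P M]] := S1 sg pf k345 M2a km2 ex Ek M2b X1 X2 X3 n12.
      by exists g; split => //; left.
    have /orP [/eqP Ed1|/eqP Ed3] := three Hd M1a M2a M3a n12m n23m n13m ndm2.
      by move: dk; rewrite Ed1 Ek1 eqxx.
    have Hxb : m2 \in colors e f x.
      apply/negPn/negP => H.
      have nm : m2 != d by rewrite eq_sym.
      exact: (two_missing reg pf nm (in345_iota M2a) (in345_iota Hd) H Hxd).
    have X1 : k != m3 by rewrite Ek1.
    have X2 : m3 \notin colors e f x by rewrite -Ed3.
    have X3 : k \notin colors e f v1 by rewrite Ek1.
    have X4 : v3 != v2 by rewrite eq_sym.
    have [g [R P M]] := S2 sg pf k345 M2a M3a km2 X1 n23m ex Ek M2b Hxb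
       X2 M3b X3 X4 n12 nx3 nx1.
    by exists g; split => //; case: M => M; [right|left].
  + case: (d =P m2) => [Ed|/eqP ndm2].
      have X1 : m2 \notin colors e f x by rewrite -Ed.
      have X2 : k \notin colors e f v3 by rewrite Ek3.
      have X3 : v3 != x by rewrite eq_sym.
      have X4 : v3 != v2 by rewrite eq_sym.
      have [g [R P M]] := S1 sg pf k345 M2a km2 ex Ek M2b X1 X2 X3 X4.
      by exists g; split => //; right; apply: mp_sym.
    have /orP [/eqP Ed1|/eqP Ed3] := three Hd M1a M2a M3a n12m n23m n13m ndm2; last first.
      by move: dk; rewrite Ed3 Ek3 eqxx.
    have Hxb : m2 \in colors e f x.
      apply/negPn/negP => H.
      have nm : m2 != d by rewrite eq_sym.
      exact: (two_missing reg pf nm (in345_iota M2a) (in345_iota Hd) H Hxd).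
    have X1 : k != m1 by rewrite Ek3 eq_sym.
    have X2 : m2 != m1 by rewrite eq_sym.
    have X3 : m1 \notin colors e f x by rewrite -Ed1.
    have X4 : k \notin colors e f v3 by rewrite Ek3.
    have X5 : v3 != v2 by rewrite eq_sym.
    have [g [R P M]] := S2 sg pf k345 M2a M1a km2 X1 X2
       ex Ek M2b Hxb X3 M1b X4 n12 X5 nx1 nx3.
    by exists g; split => //; case: M => M; [left|right]; apply: mp_sym.
- move=> u0 v1 v2 v3 v4 u5 Hu Hp Hc.
  move: Hp => /= /and5P [e01 e12 e23 e34 /andP [e45 _]].
  have c01 : (f u0 v1 == 1) || (f u0 v1 == 2) by apply: Hc; rewrite !inE eqxx ?orbT.
  have c12 : (f v1 v2 == 1) || (f v1 v2 == 2) by apply: Hc; rewrite !inE eqxx ?orbT.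
  have c23 : (f v2 v3 == 1) || (f v2 v3 == 2) by apply: Hc; rewrite !inE eqxx ?orbT.
  have c34 : (f v3 v4 == 1) || (f v3 v4 == 2) by apply: Hc; rewrite !inE eqxx ?orbT.
  have c45 : (f v4 u5 == 1) || (f v4 u5 == 2) by apply: Hc; rewrite !inE eqxx ?orbT.
  have n02 : u0 != v2 by dist Hu.
  have n13 : v1 != v3 by dist Hu.
  have n24 : v2 != v4 by dist Hu.
  have n35 : v3 != u5 by dist Hu.
  have n12 : v1 != v2 by dist Hu.
  have n23 : v2 != v3 by dist Hu.
  have n34 : v3 != v4 by dist Hu.
  have n14 : v1 != v4 by dist Hu.
  have /andP [h11 h12] := mid _ _ _ e01 e12 n02 c01 c12.
  have /andP [h21 h22] := mid _ _ _ e12 e23 n13 c12 c23.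
  have /andP [h31 h32] := mid _ _ _ e23 e34 n24 c23 c34.
  have /andP [h41 h42] := mid _ _ _ e34 e45 n35 c34 c45.
  have [m1 [M1a M1b M1c]] := miss345 reg pf h11 h12.
  have [m2 [M2a M2b M2c]] := miss345 reg pf h21 h22.
  have [m3 [M3a M3b M3c]] := miss345 reg pf h31 h32.
  have [m4 [M4a M4b M4c]] := miss345 reg pf h41 h42.
  case: (m1 =P m2) => [E12|/eqP n12m].
    exists f; split => //; first exact: reach_refl.
    by apply: Or31; exists m1 => //; apply/andP; split => //; rewrite E12.
  case: (m2 =P m3) => [E23|/eqP n23m].
    exists f; split => //; first exact: reach_refl.
    by apply: Or32; exists m2 => //; apply/andP; split => //; rewrite E23.
  case: (m3 =P m4) => [E34|/eqP n34m].
    exists f; split => //; first exact: reach_refl.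
    by apply: Or33; exists m3 => //; apply/andP; split => //; rewrite E34.
  case: (m1 =P m3) => [E13|/eqP n13m].
    have X : m1 \notin colors e f v3 by rewrite E13.
    have [g [R P M]] := triple sg pf M1a M2a n12m M1b X (M2c m1 M1a n12m) M2b
                          n12 n23 n13.
    by exists g; split => //; case: M => M; [apply: Or31|apply: Or32].
  case: (m2 =P m4) => [E24|/eqP n24m].
    have X : m2 \notin colors e f v4 by rewrite E24.
    have [g [R P M]] := triple sg pf M2a M3a n23m M2b X (M3c m2 M2a n23m) M3b
                          n23 n34 n24.
    by exists g; split => //; case: M => M; [apply: Or32|apply: Or33].
  have n42m : m4 != m2 by rewrite eq_sym.
  have /orP [/eqP E41|/eqP E43] := three M4a M1a M2a M3a n12m n23m n13m n42m; last first.
    by move: n34m; rewrite E43 eqxx.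
  have X : m1 \notin colors e f v4 by rewrite -E41.
  have [g [R P M]] := ABCA sg pf M1a M2a M3a n12m n23m n13m M1b M2b (M2c m1 M1a n12m) M3b
     (M3c m1 M1a n13m) (M3c m2 M2a n23m) X (M4c m2 M2a n24m)
     n12 n23 n34 n24 n14.
  by exists g.
Qed.
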